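(* Let $\sigma\ge0$, $\gamma>0$, $V=\sqrt{1+\sigma}$, let $(n^\varepsilon,u^\varepsilon,\phi^\varepsilon)$ be the solitary wave solution and $\widetilde N_\varepsilon(\xi)=\frac{n^\varepsilon(\xi)-1}{\varepsilon}$. There exist positive constants $\varepsilon_0$ and $\delta_1$ such that for each $0<\delta<\delta_1$ there exists $\xi_\delta>0$ with \[ 0<\widetilde N_\varepsilon(\xi)\le\delta\qquad\text{for all }\xi\ge\xi_\delta\text{ and all }0<\varepsilon<\varepsilon_0. \] Here $\delta_1,\delta,\xi_\delta$ are independent of $\varepsilon$ and $\xi$.
   Context: For $\varepsilon>0$, consider the system in $\xi\in\mathbb{R}$: $-(V+\gamma\varepsilon)n'+(nu)'=0$, $-(V+\gamma\varepsilon)u'+uu'+\sigma n'/n=-\phi'$, $\varepsilon\phi''=e^\phi-n$, with $n\to1,u\to0,\phi\to0$ as $|\xi|\to\infty$. With $V=\sqrt{1+\sigma}$, for all sufficiently small $\varepsilon>0$ it has a non-trivial smooth solution unique up to translation; the ''solitary wave solution'' $(n^\varepsilon,u^\varepsilon,\phi^\varepsilon)$ is the translate that is even in $\xi$ and has all components strictly decreasing on $(0,\infty)$. *)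

(* Defs.v *)
From Stdlib Require Import Reals.
From Coquelicot Require Import Coquelicot.
Open Scope R_scope.

Definition smooth (f : R -> R) : Prop :=
  forall (k : nat) (x : R), ex_derive_n f k x.

Definition solves_system (sigma gamma V eps : R) (n u phi : R -> R) : Prop :=
  forall xi : R,
    - (V + gamma * eps) * Derive n xi + Derive (fun x => n x * u x) xi = 0 /\
    - (V + gamma * eps) * Derive u xi + u xi * Derive u xi
      + sigma * Derive n xi / n xi = - Derive phi xi /\
    eps * Derive_n phi 2 xi = exp (phi xi) - n xi.

Definition far_field (n u phi : R -> R) : Prop :=
  is_lim n p_infty 1 /\ is_lim n m_infty 1 /\
  is_lim u p_infty 0 /\ is_lim u m_infty 0 /\
  is_lim phi p_infty 0 /\ is_lim phi m_infty 0.

Definition even_fun (f : R -> R) : Prop := forall x, f (- x) = f x.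

Definition strict_decr_pos (f : R -> R) : Prop :=
  forall x y, 0 < x -> x < y -> f y < f x.

(* (n,u,phi) is the solitary wave solution for parameter eps: a smooth,
   non-trivial solution of the system with the far-field conditions, which is
   the (unique up to translation) translate that is even and has all
   components strictly decreasing on (0, infinity). *)
Definition solitary_wave (sigma gamma eps : R) (n u phi : R -> R) : Prop :=
  smooth n /\ smooth u /\ smooth phi /\
  solves_system sigma gamma (sqrt (1 + sigma)) eps n u phi /\
  far_field n u phi /\
  ~ (forall xi, n xi = 1 /\ u xi = 0 /\ phi xi = 0) /\
  even_fun n /\ even_fun u /\ even_fun phi /\
  strict_decr_pos n /\ strict_decr_pos u /\ strict_decr_pos phi.

(* Main.v *)
Require Import Defs.
From Stdlib Require Import Reals Lra Psatz.
From Coquelicot Require Import Coquelicot.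
Open Scope R_scope.

Lemma der_cont_pt f x l : is_derive f x l -> continuity_pt f x.
Proof.
  intro H. apply continuity_pt_filterlim.
  apply (ex_derive_continuous f x). exists l. exact H.
Qed.

Lemma mono_le (f df : R -> R) a b : a <= b ->
  (forall x, a <= x <= b -> is_derive f x (df x)) ->
  (forall x, a <= x <= b -> 0 <= df x) -> f a <= f b.
Proof.
  intros Hab Hd Hp.
  destruct (Req_dec a b) as [->|Hne]; [lra|].
  destruct (MVT_gen f a b df) as [c [Hc Heq]].
  - intros x Hx. rewrite Rmin_left in Hx by lra. rewrite Rmax_right in Hx by lra.
    apply Hd; lra.
  - intros x Hx. rewrite Rmin_left in Hx by lra. rewrite Rmax_right in Hx by lra.
    apply (der_cont_pt f x (df x)). apply Hd; lra.
  - rewrite Rmin_left in Hc by lra. rewrite Rmax_right in Hc by lra.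
    assert (0 <= df c) by (apply Hp; lra).
    assert (0 <= df c * (b - a)) by (apply Rmult_le_pos; lra). lra.
Qed.

Lemma const_deriv0 (f : R -> R) a : 
  (forall x, a < x -> is_derive f x 0) -> forall x y, a < x -> a < y -> f x = f y.
Proof.
  intros Hd x y Hx Hy.
  assert (forall x y, a < x -> x <= y -> f x <= f y /\ f y <= f x).
  { intros x0 y0 H0 H1. split.
    - apply (mono_le f (fun _ => 0)).
      + exact H1.
      + intros t Ht. apply Hd. lra.
      + intros t Ht. lra.
    - cut (- f x0 <= - f y0). { intro; lra. }
      apply (mono_le (fun t => - f t) (fun _ => 0)).
      + exact H1.
      + intros t Ht. pose proof (is_derive_opp f t 0 (Hd t ltac:(lra))) as HH.
        unfold opp in HH; simpl in HH. rewrite Ropp_0 in HH. exact HH.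
      + intros t Ht. lra. }
  destruct (Rle_dec x y) as [Hle|Hle].
  - destruct (H x y Hx Hle); lra.
  - destruct (H y x Hy) as [H1 H2]; lra.
Qed.

Definition Phi c s x := c * (c * x / (1 + x)) - (c * x / (1 + x))^2 / 2 - s * ln (1 + x).
Definition dPhi c s x := c^2 / (1+x)^3 - s / (1+x).
Definition Ff c s x := exp (Phi c s x) - 1 - x.
Definition Ee c s x := exp (Phi c s x) - 1 - c * (c * x / (1 + x)) + s * x.

Lemma Phi_der c s x : 0 <= x -> is_derive (Phi c s) x (dPhi c s x).
Proof.
  intro Hx. unfold Phi, dPhi. auto_derive.
  - lra.
  - field. lra.
Qed.

Lemma Ff_der c s x : 0 <= x -> is_derive (Ff c s) x (exp (Phi c s x) * dPhi c s x - 1).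
Proof.
  intro Hx. pose proof (Phi_der c s x Hx) as H. unfold Ff.
  auto_derive.
  - exists (dPhi c s x); exact H.
  - replace (Derive (fun x => Phi c s x) x) with (dPhi c s x)
      by (symmetry; apply is_derive_unique; exact H). ring.
Qed.

Lemma Ee_der c s x : 0 <= x -> is_derive (Ee c s) x (Ff c s x * dPhi c s x).
Proof.
  intro Hx. pose proof (Phi_der c s x Hx) as H. unfold Ee.
  auto_derive.
  - split. exists (dPhi c s x); exact H. split; [lra|exact I].
  - replace (Derive (fun x => Phi c s x) x) with (dPhi c s x)
      by (symmetry; apply is_derive_unique; exact H). unfold Ff, dPhi. field. lra.
Qed.

Lemma Ff_ode c s x : 0 <= x ->
  exp (Phi c s x) * dPhi c s x - 1 = (c^2/(1+x)^2 - 1 - s) + dPhi c s x * Ff c s x.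
Proof. intro Hx. unfold Ff, dPhi. field. lra. Qed.

Definition params (s g V L e : R) :=
  0 <= s /\ 0 < g /\ V * V = 1 + s /\ 1 <= V /\ L = 1 + s + g /\ 0 < e /\
  e * (10000 * L^6) <= g.

Lemma params_facts s g V L e : params s g V L e ->
  1 <= L /\ g <= L /\ s <= L /\ V <= L /\ 1 + s <= L /\ e <= 1 /\
  e * L^3 <= 1/5000 /\ (V + g*e)^2 <= 4 * L^2 /\ 1 + s <= (V + g * e)^2 /\
  (V + g*e)^2 - s - 1 <= 3 * L^2 * e /\ 2 * V * g * e <= (V + g*e)^2 - s - 1 /\
  4 * L * e <= 1/2.
Proof.
  intros (Hs & Hg & HV & HV1 & HL & He & Hee).
  assert (L1 : 1 <= L) by lra.
  assert (HgL : g <= L) by lra.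
  assert (HVL : V <= L) by nra.
  assert (L6 : 1 <= L^6).
  { replace 1 with (1^6) by ring. apply pow_incr; lra. }
  assert (L3 : L^3 <= L^6).
  { replace (L^6) with (L^3 * L^3) by ring. assert (1 <= L^3). { replace 1 with (1^3) by ring. apply pow_incr; lra. } nra. }
  assert (HeL3 : e * L^3 <= 1/5000).
  { assert (e * (5000 * L^6) <= L) by lra.
    assert (e * L^6 * 5000 <= L) by lra.
    assert (e * L^3 * L^3 * 5000 <= L) by (replace (e*L^3*L^3) with (e * L^6) by ring; lra).
    assert (1 <= L^3*L^3) by (replace (L^3*L^3) with (L^6) by ring; lra).
    assert (L * L * L = L^3) by ring.
    assert (L <= L^3) by nra.
    assert (0 <= e * L^3) by (apply Rmult_le_pos; [lra| apply pow_le; lra]).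
    assert (e * L^3 * (L^3 * 5000) <= L^3) by nra. 
    nra. }
  assert (He1 : e <= 1).
  { assert (1 <= L^3) by (replace 1 with (1^3) by ring; apply pow_incr; lra). nra. }
  assert (HeL : e * L <= 1/5000).
  { assert (L <= L^3) by (replace (L^3) with (L*(L*L)) by ring; nra). nra. }
  assert (Hge : g * e <= L) by nra.
  assert (Hge0 : 0 <= g * e) by nra.
  assert (Hsq : (V + g*e)^2 = V*V + 2*V*(g*e) + (g*e)*(g*e)) by ring.
  assert (Hc2 : (V + g*e)^2 <= 4 * L^2).
  { assert (V + g*e <= 2*L) by lra. assert (0 <= V + g*e) by lra.
    replace (4 * L^2) with ((2*L)^2) by ring. apply pow_incr; lra. }
  assert (Hc3 : (V + g*e)^2 - s - 1 <= 3 * L^2 * e).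
  { rewrite Hsq, HV.
    assert (V * (g*e) <= L * (L * e)) by (apply Rmult_le_compat; nra).
    assert ((g*e)*(g*e) <= (L*e)*(L*1)) by (apply Rmult_le_compat; nra).
    nra. }
  repeat split; try lra; try nra.
Qed.

Lemma cmp_ode (z dz p P : R -> R) a b : a <= b ->
  (forall x, a <= x <= b -> is_derive z x (dz x)) ->
  (forall x, a <= x <= b -> is_derive P x (p x)) ->
  (forall x, a <= x <= b -> p x * z x <= dz x) -> 0 <= z a -> 0 <= z b.
Proof.
  intros Hab Hz HP Hi Ha.
  assert (H : z a * exp (- P a) <= z b * exp (- P b)).
  { apply (mono_le (fun x => z x * exp (- P x)) (fun x => (dz x - p x * z x) * exp (- P x))).
    - exact Hab.
    - intros x Hx. pose proof (Hz x Hx) as H1. pose proof (HP x Hx) as H2.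
      auto_derive.
      + split. exists (dz x); exact H1. split. exists (p x); exact H2. exact I.
      + replace (Derive (fun x => z x) x) with (dz x) by (symmetry; apply is_derive_unique; exact H1).
        replace (Derive (fun x => P x) x) with (p x) by (symmetry; apply is_derive_unique; exact H2).
        ring.
    - intros x Hx. apply Rmult_le_pos. pose proof (Hi x Hx); lra. apply Rlt_le, exp_pos. }
  assert (0 <= z a * exp (- P a)) by (apply Rmult_le_pos; [lra| apply Rlt_le, exp_pos]).
  pose proof (exp_pos (- P b)).
  destruct (Rle_dec 0 (z b)) as [|Hn]; [assumption|].
  assert (z b * exp (- P b) < 0) by nra.
  lra.
Qed.

Lemma Rabs_le_e x y : Rabs x <= y -> - y <= x <= y.
Proof. unfold Rabs; destruct (Rcase_abs x); intros; lra. Qed.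

Lemma inv_sq_up t : 0 <= t -> 1/(1+t)^2 <= 1 - 2*t + 4*t^2.
Proof.
  intro Ht. assert (0 < (1+t)^2) by (apply pow_lt; lra).
  apply (Rmult_le_reg_r ((1+t)^2)); auto. field_simplify; try lra.
  assert (0 <= t^2) by nra. assert (0 <= t^3) by (apply pow_le; lra). assert (0 <= t^4) by (apply pow_le; lra).
  nra.
Qed.

Lemma inv_sq_lo t : 0 <= t -> 1 - 2*t <= 1/(1+t)^2.
Proof.
  intro Ht. assert (0 < (1+t)^2) by (apply pow_lt; lra).
  apply (Rmult_le_reg_r ((1+t)^2)); auto. field_simplify; try lra.
  assert (0 <= t^2) by nra. assert (0 <= t^3) by (apply pow_le; lra). nra.
Qed.

Lemma dPhi_abs c s t : 0 <= t -> 0 <= s -> Rabs (dPhi c s t) <= c^2 + s.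
Proof.
  intros Ht Hs. unfold dPhi.
  assert (0 < 1/(1+t)^3 <= 1).
  { split. apply Rdiv_lt_0_compat; [lra|apply pow_lt; lra].
    assert (1 <= (1+t)^3) by (replace 1 with (1^3) by ring; apply pow_incr; lra).
    apply (Rmult_le_reg_r ((1+t)^3)); [lra|]. field_simplify; lra. }
  assert (0 < 1/(1+t) <= 1).
  { split. apply Rdiv_lt_0_compat; lra.
    apply (Rmult_le_reg_r (1+t)); [lra|]. field_simplify; lra. }
  assert (0 <= c^2) by (apply pow2_ge_0).
  replace (c^2/(1+t)^3 - s/(1+t)) with (c^2 * (1/(1+t)^3) - s * (1/(1+t))) by (field; lra).
  apply Rabs_le. split; nra.
Qed.

Lemma bracket s L e d c2 x : 0 <= s -> 1 + s <= L -> 1 <= L -> 0 < e -> e * L^3 <= 1/5000 ->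
  0 <= c2 <= 4 * L^2 -> 0 <= d <= 3 * L^2 * e -> 0 <= x <= 4 * L * e ->
  6 * L^2 * e + 4 * c2 * x + (c2 + s) * (d + (1+s)*x + 100*L^4*e*x) <= 199 * L^4 * e.
Proof.
  intros Hs HL L1 He HeL Hc Hd Hx.
  assert (L2 : 1 <= L^2) by nra.
  assert (Hl4 : L^4 = L^2 * L^2) by ring.
  assert (Hl3 : L^3 = L * L^2) by ring.
  assert (A1 : 4 * c2 * x <= 64 * L^4 * e).
  { assert (c2 * x <= (4*L^2) * (4*L*e)) by (apply Rmult_le_compat; lra).
    assert (L * L^2 <= L^2 * L^2) by nra. nra. }
  assert (A2 : (1+s) * x <= L * (4*L*e)) by (apply Rmult_le_compat; lra).
  assert (A3 : 100*L^4*e*x <= 100*L^4*e*(4*L*e)).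
  { apply Rmult_le_compat_l; [|lra]. assert (0 <= L^4) by (apply pow_le; lra). nra. }
  assert (A4 : 100*L^4*e*(4*L*e) <= 20 * L^2 * e).
  { replace (100*L^4*e*(4*L*e)) with (400 * (e * L^3) * (L^2 * e)) by ring.
    assert (0 <= L^2 * e) by nra. nra. }
  assert (A5 : d + (1+s)*x + 100*L^4*e*x <= 27 * L^2 * e) by nra.
  assert (A6 : 0 <= d + (1+s)*x + 100*L^4*e*x).
  { assert (0 <= 100*L^4*e*x). { assert (0 <= L^4) by (apply pow_le; lra). apply Rmult_le_pos; [|lra]. nra. } nra. }
  assert (A7 : (c2 + s) * (d + (1+s)*x + 100*L^4*e*x) <= (5 * L^2) * (27 * L^2 * e)).
  { assert (L <= L^2) by nra. apply Rmult_le_compat; lra. }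
  assert (A8 : 6 * L^2 * e <= 6 * L^4 * e) by nra.
  nra.
Qed.

Lemma Q_bounds s g V L e t : params s g V L e -> 0 <= t <= 4*g*e ->
  let c := V + g*e in let d := c^2 - s - 1 in let C := 100 * L^4 in
  0 <= (d - 2*(1+s)*t + 2*C*e*t) - (c^2/(1+t)^2 - 1 - s) - dPhi c s t * (d*t - (1+s)*t^2 + C*e*t^2) /\
  (d - 2*(1+s)*t - 2*C*e*t) - (c^2/(1+t)^2 - 1 - s) - dPhi c s t * (d*t - (1+s)*t^2 - C*e*t^2) <= 0.
Proof.
  intros Hp Ht c d C. unfold C in *. clear C.
  pose proof (params_facts _ _ _ _ _ Hp) as (L1 & HgL & HsL & HVL & HsL' & He1 & HeL3 & Hc2 & Hc2' & Hd & Hd' & HLe).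
  destruct Hp as (Hs & Hg & HV & HV1 & HL & He & Hee).
  fold c in Hc2, Hc2', Hd, Hd'. fold d in Hd, Hd'.
  assert (Hd0 : 0 <= d) by (unfold d; lra).
  assert (Htx : 0 <= t <= 4 * L * e) by (split; [lra|]; nra).
  assert (Hc20 : 0 <= c^2) by apply pow2_ge_0.
  pose proof (bracket s L e d (c^2) t Hs HsL' L1 He HeL3 (conj Hc20 Hc2) (conj Hd0 Hd) Htx) as Hb.
  assert (HC : 0 <= 100 * L^4) by (assert (0 <= L^4) by (apply pow_le; lra); lra).
  assert (HDa := dPhi_abs c s t (proj1 Ht) Hs).
  set (D := dPhi c s t) in *.
  set (B := d + (1+s)*t + 100*L^4*e*t) in *.
  assert (HB0 : 0 <= B).
  { unfold B. assert (0 <= L^4) by (apply pow_le; lra).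
    assert (0 <= 100*L^4*e*t) by (apply Rmult_le_pos; [nra|lra]). nra. }
  assert (HW : forall sg, sg = 1 \/ sg = -1 -> Rabs (D * (d*t - (1+s)*t^2 + sg*(100*L^4)*e*t^2)) <= (c^2+s) * (t * B)).
  { intros sg Hsg. rewrite Rabs_mult. apply Rmult_le_compat; try apply Rabs_pos; auto.
    assert (0 <= d*t) by nra. assert (0 <= (1+s)*t^2) by nra.
    assert (0 <= 100*L^4*e*t^2) by (assert (0 <= L^4) by (apply pow_le; lra); assert (0 <= t^2) by nra;
      apply Rmult_le_pos; [nra|lra]).
    replace (t * B) with (d*t + (1+s)*t^2 + 100*L^4*e*t^2) by (unfold B; ring).
    apply Rabs_le. destruct Hsg as [-> | ->]; split; lra. }
  assert (H1 := inv_sq_up t (proj1 Ht)). assert (H2 := inv_sq_lo t (proj1 Ht)).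
  assert (E1 : c^2/(1+t)^2 = c^2 * (1/(1+t)^2)) by (field; lra).
  rewrite E1.
  assert (E2 : c^2 = d + 1 + s) by (unfold d; ring).
  assert (HtB : t * (6 * L^2 * e + 4 * c^2 * t + (c^2 + s) * B) <= t * (199 * L^4 * e)).
  { apply Rmult_le_compat_l; lra. }
  assert (L4 : 1 <= L^4) by (replace 1 with (1^4) by ring; apply pow_incr; lra).
  assert (H6 : 6 * L^2 * e <= 6 * L^4 * e) by nra.
  split.
  - pose proof (HW 1 (or_introl eq_refl)) as HW1.
    replace (1 * (100*L^4) * e * t^2) with (100*L^4 * e * t^2) in HW1 by ring.
    apply Rabs_le_e in HW1. destruct HW1 as [_ HW1].
    assert (c^2 * (1/(1+t)^2) <= c^2 * (1 - 2*t + 4*t^2)) by (apply Rmult_le_compat_l; lra).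
    assert (0 <= (c^2 - (1+s)) * t) by (apply Rmult_le_pos; lra).
    assert (0 <= L^2 * e * t) by (apply Rmult_le_pos; [nra|lra]).
    assert (0 <= L^4 * e * t) by (apply Rmult_le_pos; [nra|lra]).
    lra.
  - pose proof (HW (-1) (or_intror eq_refl)) as HW1.
    replace (-1 * (100*L^4) * e * t^2) with (- (100*L^4 * e * t^2)) in HW1 by ring.
    apply Rabs_le_e in HW1. destruct HW1 as [HW1 _].
    assert (c^2 * (1 - 2*t) <= c^2 * (1/(1+t)^2)) by (apply Rmult_le_compat_l; lra).
    assert (0 <= c^2 * t * t) by (apply Rmult_le_pos; [apply Rmult_le_pos|]; lra).
    assert (0 <= L^2 * e * t) by (apply Rmult_le_pos; [nra|lra]).
    assert (d * t <= 3 * L^2 * e * t) by (apply Rmult_le_compat_r; lra).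
    assert (0 <= L^4 * e * t) by (apply Rmult_le_pos; [nra|lra]).
    assert (c^2 * t = (d+1+s)*t) by (rewrite E2; ring). lra.
Qed.

Lemma Phi0 c s : Phi c s 0 = 0.
Proof. unfold Phi. rewrite Rplus_0_r, ln_1. field. Qed.

Lemma Ff0 c s : Ff c s 0 = 0.
Proof. unfold Ff. rewrite Phi0, exp_0. ring. Qed.

Lemma Ee0 c s : Ee c s 0 = 0.
Proof. unfold Ee. rewrite Phi0, exp_0. field. Qed.

Lemma F_bounds s g V L e x : params s g V L e -> 0 <= x <= 4*g*e ->
  let c := V + g*e in let d := c^2 - s - 1 in
  Ff c s x <= d*x - (1+s)*x^2 + 100*L^4*e*x^2 /\ d*x - (1+s)*x^2 - 100*L^4*e*x^2 <= Ff c s x.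
Proof.
  intros Hp Hx c d.
  split.
  - cut (0 <= (d*x - (1+s)*x^2 + 100*L^4*e*x^2) - Ff c s x). { intro; lra. }
    apply (cmp_ode (fun t => (d*t - (1+s)*t^2 + 100*L^4*e*t^2) - Ff c s t)
      (fun t => (d - 2*(1+s)*t + 2*(100*L^4)*e*t) - (exp (Phi c s t) * dPhi c s t - 1))
      (dPhi c s) (Phi c s) 0 x).
    + lra.
    + intros t Ht. pose proof (Ff_der c s t (proj1 Ht)) as H. auto_derive.
      * exists (exp (Phi c s t) * dPhi c s t - 1). exact H.
      * replace (Derive (fun x => Ff c s x) t) with (exp (Phi c s t) * dPhi c s t - 1)
          by (symmetry; apply is_derive_unique; exact H). ring.
    + intros t Ht. apply Phi_der. lra.
    + intros t Ht. rewrite Ff_ode by lra.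
      destruct (Q_bounds s g V L e t Hp ltac:(lra)) as [Q1 _]. fold c d in Q1. lra.
    + rewrite Ff0. lra.
  - cut (0 <= Ff c s x - (d*x - (1+s)*x^2 - 100*L^4*e*x^2)). { intro; lra. }
    apply (cmp_ode (fun t => Ff c s t - (d*t - (1+s)*t^2 - 100*L^4*e*t^2))
      (fun t => (exp (Phi c s t) * dPhi c s t - 1) - (d - 2*(1+s)*t - 2*(100*L^4)*e*t))
      (dPhi c s) (Phi c s) 0 x).
    + lra.
    + intros t Ht. pose proof (Ff_der c s t (proj1 Ht)) as H. auto_derive.
      * exists (exp (Phi c s t) * dPhi c s t - 1). exact H.
      * replace (Derive (fun x => Ff c s x) t) with (exp (Phi c s t) * dPhi c s t - 1)
          by (symmetry; apply is_derive_unique; exact H). ring.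
    + intros t Ht. apply Phi_der. lra.
    + intros t Ht. rewrite Ff_ode by lra.
      destruct (Q_bounds s g V L e t Hp ltac:(lra)) as [_ Q2]. fold c d in Q2. lra.
    + rewrite Ff0. lra.
Qed.

Lemma inv1_lo x : 0 <= x -> 1 - x <= 1/(1+x) <= 1.
Proof. intro. split; apply (Rmult_le_reg_r (1+x)); try lra; field_simplify; nra. Qed.

Lemma inv3_lo x : 0 <= x -> 1 - 3*x <= 1/(1+x)^3 <= 1.
Proof.
  intro Hx. assert (0 < (1+x)^3) by (apply pow_lt; lra).
  assert (0 <= x^2) by nra. assert (0 <= x^3) by (apply pow_le; lra). assert (0 <= x^4) by (apply pow_le; lra).
  split; apply (Rmult_le_reg_r ((1+x)^3)); try lra; field_simplify; try lra; nra.
Qed.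

Lemma dPhi_near1 s g V L e x : params s g V L e -> 0 <= x <= 4*g*e ->
  Rabs (dPhi (V + g*e) s x - 1) <= 55 * L^3 * e.
Proof.
  intros Hp Hx.
  pose proof (params_facts _ _ _ _ _ Hp) as (L1 & HgL & HsL & HVL & HsL' & He1 & HeL3 & Hc2 & Hc2' & Hd & Hd' & HLe).
  destruct Hp as (Hs & Hg & HV & HV1 & HL & He & Hee).
  set (c := V + g*e) in *.
  assert (Hx' : x <= 4 * L * e) by nra.
  destruct (inv3_lo x (proj1 Hx)) as [I3a I3b].
  destruct (inv1_lo x (proj1 Hx)) as [I1a I1b].
  assert (E : dPhi c s x - 1 = (c^2 - s - 1) + c^2 * (1/(1+x)^3 - 1) - s * (1/(1+x) - 1)) by (unfold dPhi; field; lra).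
  rewrite E.
  assert (0 <= c^2) by apply pow2_ge_0.
  assert (A1 : -(3 * x) * c^2 <= c^2 * (1/(1+x)^3 - 1) <= 0) by (split; nra).
  assert (A2 : 0 <= - s * (1/(1+x) - 1) <= s * x) by (split; nra).
  assert (B1 : c^2 * x <= (4 * L^2) * (4 * L * e)) by (apply Rmult_le_compat; lra).
  assert (B2 : s * x <= L * (4 * L * e)) by (apply Rmult_le_compat; lra).
  assert (L2 : L^2 <= L^3) by (replace (L^3) with (L*L^2) by ring; nra).
  assert (0 <= L^2 * e) by nra.
  assert (L^2 * e <= L^3 * e) by nra.
  assert (L * L = L^2) by ring.
  assert (L * (L * L) = L^3) by ring.
  apply Rabs_le. split; nra.
Qed.

Lemma Ff_abs s g V L e x : params s g V L e -> 0 <= x <= 4*g*e ->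
  Rabs (Ff (V + g*e) s x) <= 8 * L^2 * e * x.
Proof.
  intros Hp Hx.
  destruct (F_bounds s g V L e x Hp Hx) as [F1 F2].
  pose proof (params_facts _ _ _ _ _ Hp) as (L1 & HgL & HsL & HVL & HsL' & He1 & HeL3 & Hc2 & Hc2' & Hd & Hd' & HLe).
  destruct Hp as (Hs & Hg & HV & HV1 & HL & He & Hee).
  set (c := V + g*e) in *. set (d := c^2 - s - 1) in *.
  assert (Hx' : x <= 4 * L * e) by nra.
  assert (0 <= d) by (unfold d; lra).
  assert (B1 : (1+s) * x <= L * (4 * L * e)) by (apply Rmult_le_compat; lra).
  assert (L4 : 0 <= L^4) by (apply pow_le; lra).
  assert (B2 : 100 * L^4 * e * x <= 100 * L^4 * e * (4 * L * e)) by (apply Rmult_le_compat_l; nra).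
  assert (B3 : 100 * L^4 * e * (4 * L * e) <= L^2 * e).
  { replace (100 * L^4 * e * (4 * L * e)) with (400 * (e * L^3) * (L^2 * e)) by ring.
    assert (0 <= L^2 * e) by nra. nra. }
  assert (B4 : d * x <= 3 * L^2 * e * x) by (apply Rmult_le_compat_r; lra).
  assert (B5 : (1+s) * x * x <= L * (4 * L * e) * x) by (apply Rmult_le_compat_r; lra).
  assert (B6 : 100 * L^4 * e * x * x <= L^2 * e * x) by (apply Rmult_le_compat_r; lra).
  assert (0 <= d * x) by nra. assert (0 <= (1+s)*x*x) by nra.
  assert (0 <= 100 * L^4 * e * x * x) by (apply Rmult_le_pos; [apply Rmult_le_pos|]; nra).
  apply Rabs_le. split; nra.
Qed.

Lemma deriv_bounds (f df : R -> R) a b lo hi : a <= b ->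
  (forall t, a <= t <= b -> is_derive f t (df t)) ->
  (forall t, a <= t <= b -> lo <= df t <= hi) ->
  f a + lo * (b - a) <= f b <= f a + hi * (b - a).
Proof.
  intros Hab Hd Hb. split.
  - cut ((fun t => f t - lo * t) a <= (fun t => f t - lo * t) b). { simpl; lra. }
    apply (mono_le _ (fun t => df t - lo)); [lra| |].
    + intros t Ht. pose proof (Hd t Ht) as H. auto_derive.
      * exists (df t); exact H.
      * replace (Derive (fun x => f x) t) with (df t) by (symmetry; apply is_derive_unique; exact H). ring.
    + intros t Ht. pose proof (Hb t Ht). lra.
  - cut ((fun t => hi * t - f t) a <= (fun t => hi * t - f t) b). { simpl; lra. }
    apply (mono_le _ (fun t => hi - df t)); [lra| |].
    + intros t Ht. pose proof (Hd t Ht) as H. auto_derive.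
      * exists (df t); exact H.
      * replace (Derive (fun x => f x) t) with (df t) by (symmetry; apply is_derive_unique; exact H). ring.
    + intros t Ht. pose proof (Hb t Ht). lra.
Qed.

Lemma Phi_bounds s g V L e x : params s g V L e -> 0 <= x <= 4*g*e ->
  x / 2 <= Phi (V + g*e) s x <= 2 * x.
Proof.
  intros Hp Hx.
  pose proof (params_facts _ _ _ _ _ Hp) as (L1 & HgL & HsL & HVL & HsL' & He1 & HeL3 & _).
  assert (Hd : forall t, 0 <= t <= x -> 1/2 <= dPhi (V + g*e) s t <= 2).
  { intros t Ht. pose proof (dPhi_near1 s g V L e t Hp ltac:(lra)) as H. apply Rabs_le_e in H.
    destruct Hp as (_ & _ & _ & _ & _ & He & _). split; lra. }
  pose proof (deriv_bounds (Phi (V+g*e) s) (dPhi (V+g*e) s) 0 x (1/2) 2 (proj1 Hx)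
    (fun t Ht => Phi_der _ _ t (proj1 Ht)) Hd) as H.
  rewrite Phi0 in H. lra.
Qed.

Lemma FdPhi_bounds s g V L e t : params s g V L e -> 0 <= t <= 4*g*e ->
  let c := V + g*e in let d := c^2 - s - 1 in
  d*t - (1+s)*t^2 - 900*L^5*e^2*t <= Ff c s t * dPhi c s t <= d*t - (1+s)*t^2 + 900*L^5*e^2*t.
Proof.
  intros Hp Ht c d.
  destruct (F_bounds s g V L e t Hp Ht) as [F1 F2]. fold c d in F1, F2.
  pose proof (Ff_abs s g V L e t Hp Ht) as FA. fold c in FA.
  pose proof (dPhi_near1 s g V L e t Hp Ht) as DA. fold c in DA.
  pose proof (params_facts _ _ _ _ _ Hp) as (L1 & HgL & HsL & HVL & HsL' & He1 & HeL3 & _).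
  destruct Hp as (Hs & Hg & HV & HV1 & HL & He & Hee).
  assert (Hprod : Rabs (Ff c s t * (dPhi c s t - 1)) <= (8 * L^2 * e * t) * (55 * L^3 * e)).
  { rewrite Rabs_mult. apply Rmult_le_compat; try apply Rabs_pos; auto. }
  apply Rabs_le_e in Hprod.
  assert (Ht' : t <= 4 * L * e) by nra.
  assert (L4 : 0 <= L^4) by (apply pow_le; lra).
  assert (B : 100 * L^4 * e * t^2 <= 100 * L^4 * e * (4 * L * e) * t).
  { replace (100 * L^4 * e * t^2) with ((100 * L^4 * e * t) * t) by ring.
    replace (100 * L^4 * e * (4 * L * e) * t) with ((100 * L^4 * e * t) * (4 * L * e)) by ring.
    apply Rmult_le_compat_l; [|lra]. apply Rmult_le_pos; [|lra]. nra. }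
  assert (E1 : (8 * L^2 * e * t) * (55 * L^3 * e) = 440 * L^5 * e^2 * t) by ring.
  assert (E2 : 100 * L^4 * e * (4 * L * e) * t = 400 * L^5 * e^2 * t) by ring.
  assert (E3 : Ff c s t * dPhi c s t = Ff c s t + Ff c s t * (dPhi c s t - 1)) by ring.
  assert (0 <= L^5 * e^2 * t) by (apply Rmult_le_pos; [apply Rmult_le_pos|]; try apply pow_le; nra).
  rewrite E3. split; lra.
Qed.

Lemma E_bounds s g V L e x : params s g V L e -> 0 <= x <= 4*g*e ->
  let c := V + g*e in let d := c^2 - s - 1 in
  d*x^2/2 - (1+s)*x^3/3 - 450*L^5*e^2*x^2 <= Ee c s x <= d*x^2/2 - (1+s)*x^3/3 + 450*L^5*e^2*x^2.
Proof.
  intros Hp Hx c d. split.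
  - cut ((fun t => Ee c s t - (d*t^2/2 - (1+s)*t^3/3 - 450*L^5*e^2*t^2)) 0 <=
         (fun t => Ee c s t - (d*t^2/2 - (1+s)*t^3/3 - 450*L^5*e^2*t^2)) x).
    { simpl. rewrite Ee0. lra. }
    apply (mono_le _ (fun t => Ff c s t * dPhi c s t - (d*t - (1+s)*t^2 - 900*L^5*e^2*t))); [lra| |].
    + intros t Ht. pose proof (Ee_der c s t (proj1 Ht)) as H. auto_derive.
      * exists (Ff c s t * dPhi c s t); exact H.
      * replace (Derive (fun x => Ee c s x) t) with (Ff c s t * dPhi c s t) by (symmetry; apply is_derive_unique; exact H). field.
    + intros t Ht. destruct (FdPhi_bounds s g V L e t Hp ltac:(lra)) as [H1 H2]. fold c d in H1, H2. lra.
  - cut ((fun t => (d*t^2/2 - (1+s)*t^3/3 + 450*L^5*e^2*t^2) - Ee c s t) 0 <=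
         (fun t => (d*t^2/2 - (1+s)*t^3/3 + 450*L^5*e^2*t^2) - Ee c s t) x).
    { simpl. rewrite Ee0. lra. }
    apply (mono_le _ (fun t => (d*t - (1+s)*t^2 + 900*L^5*e^2*t) - Ff c s t * dPhi c s t)); [lra| |].
    + intros t Ht. pose proof (Ee_der c s t (proj1 Ht)) as H. auto_derive.
      * exists (Ff c s t * dPhi c s t); exact H.
      * replace (Derive (fun x => Ee c s x) t) with (Ff c s t * dPhi c s t) by (symmetry; apply is_derive_unique; exact H). field.
    + intros t Ht. destruct (FdPhi_bounds s g V L e t Hp ltac:(lra)) as [H1 H2]. fold c d in H1, H2. lra.
Qed.

Lemma params_more s g V L e : params s g V L e ->
  (V + g*e)^2 - s - 1 = 2*V*g*e + g^2*e^2 /\ e * L^5 <= g / 10000 /\ g^2 <= L^5 /\ 4*g*e/V <= 4*g*e /\ 0 < V.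
Proof.
  intro Hp. pose proof (params_facts _ _ _ _ _ Hp) as (L1 & HgL & HsL & HVL & HsL' & He1 & HeL3 & _).
  destruct Hp as (Hs & Hg & HV & HV1 & HL & He & Hee).
  assert (L5 : L^5 <= L^6) by (replace (L^6) with (L*L^5) by ring; assert (0 <= L^5) by (apply pow_le; lra); nra).
  assert (L25 : L^2 <= L^5).
  { replace (L^5) with (L^2 * L^3) by ring. assert (1 <= L^3) by (replace 1 with (1^3) by ring; apply pow_incr; lra). nra. }
  repeat split.
  - replace ((V + g*e)^2) with (V*V + 2*V*g*e + g^2*e^2) by ring. lra.
  - nra.
  - nra.
  - unfold Rdiv. assert (/V <= 1) by (rewrite <- Rinv_1; apply Rinv_le_contravar; lra). assert (0 < / V) by (apply Rinv_0_lt_compat; lra). assert (0 <= 4*g*e) by nra. nra.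
  - lra.
Qed.

Lemma K1 s g V L e : params s g V L e -> Ee (V + g*e) s (4*g*e/V) < 0.
Proof.
  intro Hp.
  destruct (params_more s g V L e Hp) as (Hd & HeL5 & Hg2 & HX & HV0).
  pose proof Hp as Hp'.
  destruct Hp' as (Hs & Hg & HV & HV1 & HL & He & Hee).
  set (X := 4*g*e/V).
  assert (HX0 : 0 < X) by (unfold X; apply Rdiv_lt_0_compat; nra).
  destruct (E_bounds s g V L e X Hp ltac:(unfold X in *; lra)) as [_ HE].
  rewrite Hd in HE. rewrite <- HV in HE.
  assert (VX : V * X = 4*g*e) by (unfold X; field; lra).
  assert (Hk : (2*V*g*e + g^2*e^2)/2 - (V*V)*X/3 + 450*L^5*e^2 < 0).
  { replace ((V*V)*X) with (V * (4*g*e)) by (rewrite <- VX; ring).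
    assert (0 <= L^5) by (apply pow_le; lra).
    assert (H1 : e * (g^2/2 + 450*L^5) <= e * (451 * L^5)) by (apply Rmult_le_compat_l; lra).
    assert (H2 : e * (e * (g^2/2 + 450*L^5)) <= e * (451 * (g/10000))) by (apply Rmult_le_compat_l; lra).
    assert (0 < g * e) by (apply Rmult_lt_0_compat; lra).
    assert (H3 : g * e <= V * g * e) by (assert (0 <= (V-1)*(g*e)) by (apply Rmult_le_pos; lra); lra).
    lra. }
  assert (HX2 : 0 < X^2) by (apply pow_lt; lra).
  assert (HE' : Ee (V + g * e) s X <= X^2 * ((2*V*g*e + g^2*e^2)/2 - (V*V)*X/3 + 450*L^5*e^2)).
  { replace (X^2 * ((2*V*g*e + g^2*e^2)/2 - (V*V)*X/3 + 450*L^5*e^2)) with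
      ((2*V*g*e + g^2*e^2) * X^2/2 - (V*V)*X^3/3 + 450*L^5*e^2*X^2) by field. exact HE. }
  assert (X^2 * ((2*V*g*e + g^2*e^2)/2 - (V*V)*X/3 + 450*L^5*e^2) < 0) by (apply Rmult_pos_neg; assumption).
  lra.
Qed.


Lemma K2 s g V L e x : params s g V L e -> 0 <= x <= 5*g*e/(2*V) ->
  g / 12 * e * x^2 <= Ee (V + g*e) s x.
Proof.
  intros Hp Hx.
  destruct (params_more s g V L e Hp) as (Hd & HeL5 & Hg2 & HX & HV0).
  pose proof Hp as Hp'.
  destruct Hp' as (Hs & Hg & HV & HV1 & HL & He & Hee).
  assert (Vx : V * x <= 5*g*e/2).
  { replace (5*g*e/2) with (V * (5*g*e/(2*V))) by (field; lra). apply Rmult_le_compat_l; lra. }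
  assert (Hx4 : x <= 4*g*e/V).
  { apply (Rmult_le_reg_l V); [lra|]. replace (V * (4*g*e/V)) with (4*g*e) by (field; lra).
    assert (0 < g*e) by (apply Rmult_lt_0_compat; lra). lra. }
  destruct (E_bounds s g V L e x Hp ltac:(lra)) as [HE _].
  rewrite Hd in HE. rewrite <- HV in HE.
  assert (0 < g * e) by (apply Rmult_lt_0_compat; lra).
  assert (H3 : g * e <= V * g * e) by (assert (0 <= (V-1)*(g*e)) by (apply Rmult_le_pos; lra); lra).
  assert (H4 : V * (V * x) <= V * (5*g*e/2)) by (apply Rmult_le_compat_l; lra).
  assert (H5 : e * (e * L^5) <= e * (g / 10000)) by (apply Rmult_le_compat_l; lra).
  assert (0 <= g^2 * e^2) by (apply Rmult_le_pos; apply pow2_ge_0).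
  assert (Hk : g/12*e <= (2*V*g*e + g^2*e^2)/2 - (V*V)*x/3 - 450*L^5*e^2).
  { replace ((V*V)*x) with (V*(V*x)) by ring. lra. }
  assert (0 <= x^2) by apply pow2_ge_0.
  assert (x^2 * (g/12*e) <= x^2 * ((2*V*g*e + g^2*e^2)/2 - (V*V)*x/3 - 450*L^5*e^2))
    by (apply Rmult_le_compat_l; lra).
  replace (x^2 * ((2*V*g*e + g^2*e^2)/2 - (V*V)*x/3 - 450*L^5*e^2)) with
      ((2*V*g*e + g^2*e^2) * x^2/2 - (V*V)*x^3/3 - 450*L^5*e^2*x^2) in H1 by field.
  lra.
Qed.

Lemma K3 s g V L e x : params s g V L e -> 5*g*e/(2*V) <= x <= 4*g*e/V ->
  Ff (V + g*e) s x <= - (g^2 * e^2).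
Proof.
  intros Hp Hx.
  destruct (params_more s g V L e Hp) as (Hd & HeL5 & Hg2 & HX & HV0).
  pose proof (params_facts _ _ _ _ _ Hp) as (L1 & HgL & HsL & HVL & HsL' & He1 & HeL3 & _).
  pose proof Hp as Hp'.
  destruct Hp' as (Hs & Hg & HV & HV1 & HL & He & Hee).
  assert (0 < g * e) by (apply Rmult_lt_0_compat; lra).
  assert (Vx : 5*g*e/2 <= V * x).
  { replace (5*g*e/2) with (V * (5*g*e/(2*V))) by (field; lra). apply Rmult_le_compat_l; lra. }
  assert (Hx0 : 0 <= x).
  { assert (0 < 5*g*e/(2*V)) by (apply Rdiv_lt_0_compat; lra). lra. }
  destruct (F_bounds s g V L e x Hp ltac:(lra)) as [HF _].
  rewrite Hd in HF. rewrite <- HV in HF.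
  assert (Hx' : x <= 4 * L * e) by nra.
  assert (L4 : 0 <= L^4) by (apply pow_le; lra).
  assert (B1 : 100*L^4*e*x <= 100*L^4*e*(4*L*e)) by (apply Rmult_le_compat_l; nra).
  assert (B2 : 100*L^4*e*(4*L*e) = 400 * e * (e * L^5)) by ring.
  assert (B3 : e * (e * L^5) <= e * (g/10000)) by (apply Rmult_le_compat_l; lra).
  assert (eL : e * L <= 1/10000).
  { assert (L4' : 1 <= L^4) by (replace 1 with (1^4) by ring; apply pow_incr; lra).
    assert (E4 : e * L^4 <= 1/10000).
    { apply (Rmult_le_reg_l L); [lra|]. replace (L * (e * L^4)) with (e * L^5) by ring. lra. }
    assert (L <= L^4).
    { replace (L^4) with (L * L^3) by ring. assert (1 <= L^3) by (replace 1 with (1^3) by ring; apply pow_incr; lra). nra. }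
    assert (e * L <= e * L^4) by (apply Rmult_le_compat_l; lra). lra. }
  assert (B4 : g^2 * e^2 <= (g * e) * (1/10000)).
  { replace (g^2*e^2) with ((g*e)*(g*e)) by ring. apply Rmult_le_compat_l; [lra|].
    assert (g * e <= L * e) by (apply Rmult_le_compat_r; lra). lra. }
  assert (H3 : g * e <= V * g * e) by (assert (0 <= (V-1)*(g*e)) by (apply Rmult_le_pos; lra); lra).
  assert (Hbr : 2*V*g*e + g^2*e^2 - V*(V*x) + 100*L^4*e*x <= - (45/100) * (V*g*e)).
  { assert (V*(5*g*e/2) <= V*(V*x)) by (apply Rmult_le_compat_l; lra). lra. }
  assert (Hm : x * (2*V*g*e + g^2*e^2 - V*(V*x) + 100*L^4*e*x) <= x * (- (45/100) * (V*g*e)))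
    by (apply Rmult_le_compat_l; lra).
  assert (Hm2 : x * (- (45/100) * (V*g*e)) = - (45/100) * (g*e) * (V * x)) by ring.
  assert (Hm3 : (45/100) * (g*e) * (5*g*e/2) <= (45/100) * (g*e) * (V * x)) by (apply Rmult_le_compat_l; lra).
  replace (x * (2*V*g*e + g^2*e^2 - V*(V*x) + 100*L^4*e*x)) with
    ((2*V*g*e + g^2*e^2) * x - (V*V) * x^2 + 100*L^4*e*x^2) in Hm by ring.
  assert ((45/100) * (g*e) * (5*g*e/2) = (9/8) * (g^2*e^2)) by field.
  assert (0 <= g^2*e^2) by (apply Rmult_le_pos; apply pow2_ge_0).
  lra.
Qed.


Lemma lim_pinf_eps (f : R -> R) (l : R) : is_lim f p_infty l ->
  forall eps, 0 < eps -> exists M, forall x, M < x -> Rabs (f x - l) < eps.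
Proof.
  intros H eps He. apply is_lim_spec in H. simpl in H.
  destruct (H (mkposreal eps He)) as [M HM]. exists M. exact HM.
Qed.

Lemma pos_of_decr_lim (f : R -> R) (l : R) : strict_decr_pos f -> is_lim f p_infty l ->
  forall x, 0 < x -> l < f x.
Proof.
  intros Hd Hl.
  assert (H : forall y, 0 < y -> l <= f y).
  { intros y Hy. destruct (Rle_dec l (f y)) as [|Hn]; [assumption|].
    destruct (lim_pinf_eps f l Hl (l - f y) ltac:(lra)) as [M HM].
    set (z := Rmax M y + 1).
    assert (Hz1 : M < z) by (unfold z; pose proof (Rmax_l M y); lra).
    assert (Hz2 : y < z) by (unfold z; pose proof (Rmax_r M y); lra).
    pose proof (HM z Hz1) as H1. pose proof (Hd y z Hy Hz2) as H2.
    apply Rabs_def2 in H1. lra. }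
  intros x Hx. pose proof (H (x+1) ltac:(lra)). pose proof (Hd x (x+1) Hx ltac:(lra)). lra.
Qed.

Lemma deriv_nonpos_of_decr (f : R -> R) x d : strict_decr_pos f -> 0 < x -> is_derive f x d -> d <= 0.
Proof.
  intros Hd Hx H. apply is_derive_Reals in H.
  destruct (Rle_dec d 0) as [|Hn]; [assumption|].
  destruct (H d ltac:(lra)) as [del Hdel].
  set (h := Rmin (del/2) (x/2)).
  assert (Hh0 : 0 < h) by (unfold h; apply Rmin_pos; [pose proof (cond_pos del)|]; lra).
  assert (Hh1 : h < del) by (unfold h; pose proof (Rmin_l (del/2) (x/2)); pose proof (cond_pos del); lra).
  assert (Hq := Hdel h ltac:(lra) ltac:(rewrite Rabs_pos_eq; lra)).
  apply Rabs_def2 in Hq.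
  pose proof (Hd x (x+h) Hx ltac:(lra)) as H2.
  assert ((f (x+h) - f x)/h < 0) by (apply Rdiv_neg_pos; lra).
  lra.
Qed.

Lemma const_lim (f : R -> R) (k l : R) a : (forall x, a < x -> f x = k) -> is_lim f p_infty l -> k = l.
Proof.
  intros Hk Hl.
  destruct (Req_dec k l) as [|Hne]; [assumption|].
  destruct (lim_pinf_eps f l Hl (Rabs (k - l)) ltac:(apply Rabs_pos_lt; lra)) as [M HM].
  set (z := Rmax M a + 1).
  assert (Hz1 : M < z) by (unfold z; pose proof (Rmax_l M a); lra).
  assert (Hz2 : a < z) by (unfold z; pose proof (Rmax_r M a); lra).
  pose proof (HM z Hz1) as H. rewrite (Hk z Hz2) in H. lra.
Qed.

Lemma is_lim_mult_fin (f g : R -> R) x (a b : R) : is_lim f x a -> is_lim g x b ->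
  is_lim (fun y => f y * g y) x (a * b).
Proof. intros Hf Hg. apply (is_lim_mult f g x a b Hf Hg). exact I. Qed.

Lemma is_lim_scal_fin (f : R -> R) x (k a : R) : is_lim f x a -> is_lim (fun y => k * f y) x (k * a).
Proof. intro Hf. apply (is_lim_scal_l f k x a Hf). Qed.

Lemma step_A1 (c : R) (N U : R -> R) :
  (forall x, ex_derive N x) -> (forall x, ex_derive U x) ->
  (forall x, - c * Derive N x + Derive (fun y => N y * U y) x = 0) ->
  is_lim N p_infty 1 -> is_lim U p_infty 0 ->
  forall x, 0 < x -> N x * U x - c * N x = - c.
Proof.
  intros dN dU H1 lN lU.
  assert (Hd : forall x, 0 < x -> is_derive (fun y => N y * U y - c * N y) x 0).
  { intros x _. pose proof (H1 x) as H.
    assert (ex_derive (fun y => N y * U y) x) by (apply ex_derive_mult; auto).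
    auto_derive.
    - repeat split; auto.
    - rewrite Derive_mult in H by auto. change (fun x => N x) with N. change (fun x => U x) with U. lra. }
  pose proof (const_deriv0 _ 0 Hd) as Hc.
  assert (Hl : is_lim (fun y => N y * U y - c * N y) p_infty (1 * 0 - c * 1)).
  { apply is_lim_minus'. apply is_lim_mult_fin; auto. apply is_lim_scal_fin; auto. }
  intros x Hx.
  assert (Hk := const_lim (fun y => N y * U y - c * N y) (N x * U x - c * N x) _ 0
     (fun y Hy => Hc y x Hy Hx) Hl).
  lra.
Qed.

Lemma step_A2 (c s : R) (N U P : R -> R) :
  (forall x, ex_derive N x) -> (forall x, ex_derive U x) -> (forall x, ex_derive P x) ->
  (forall x, 0 < x -> 0 < N x) ->
  (forall x, - c * Derive U x + U x * Derive U x + s * Derive N x / N x = - Derive P x) ->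
  is_lim N p_infty 1 -> is_lim U p_infty 0 -> is_lim P p_infty 0 ->
  forall x, 0 < x -> P x = c * U x - (U x)^2/2 - s * ln (N x).
Proof.
  intros dN dU dP Npos H2 lN lU lP.
  assert (Hd : forall x, 0 < x -> is_derive (fun y => - c * U y + (U y)^2/2 + s * ln (N y) + P y) x 0).
  { intros x Hx. pose proof (H2 x) as H. pose proof (Npos x Hx).
    auto_derive.
    - repeat split; auto.
    - change (fun x => N x) with N. change (fun x => U x) with U. change (fun x => P x) with P.
      assert (HP : Derive P x = -(- c * Derive U x + U x * Derive U x + s * Derive N x / N x)) by lra. rewrite HP. field. lra. }
  pose proof (const_deriv0 _ 0 Hd) as Hc.
  assert (Hl : is_lim (fun y => - c * U y + (U y)^2/2 + s * ln (N y) + P y) p_infty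
                 (- c * 0 + 0^2/2 + s * ln 1 + 0)).
  { apply is_lim_plus'; [apply is_lim_plus'; [apply is_lim_plus'|]|]; auto.
    - apply is_lim_scal_fin; auto.
    - apply (is_lim_ext (fun y => / 2 * (U y * U y))). { intro y. field. }
      replace (0^2/2) with (/2 * (0 * 0)) by field. apply is_lim_scal_fin, is_lim_mult_fin; auto.
    - apply is_lim_scal_fin. apply (is_lim_comp_continuous N ln p_infty 1 lN). apply continuous_ln; lra. }
  intros x Hx.
  assert (Hk := const_lim _ (- c * U x + (U x)^2/2 + s * ln (N x) + P x) _ 0
     (fun y Hy => Hc y x Hy Hx) Hl).
  rewrite ln_1 in Hk. lra.
Qed.

Lemma step_A3 (c s e : R) (N U P : R -> R) :
  0 < e ->
  (forall x, ex_derive N x) -> (forall x, ex_derive U x) -> (forall x, ex_derive P x) ->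
  (forall x, ex_derive (Derive P) x) ->
  (forall x, 0 < x -> 0 < N x) -> (forall x, 0 < x -> 0 < P x) ->
  (forall x, 0 < x -> Derive P x <= 0) ->
  (forall x, 0 < x -> N x * U x - c * N x = - c) ->
  (forall x, - c * Derive U x + U x * Derive U x + s * Derive N x / N x = - Derive P x) ->
  (forall x, e * Derive (Derive P) x = exp (P x) - N x) ->
  is_lim N p_infty 1 -> is_lim U p_infty 0 -> is_lim P p_infty 0 ->
  forall x, 0 < x -> e * (Derive P x)^2 / 2 = exp (P x) - 1 - c * U x + s * (N x - 1).
Proof.
  intros He dN dU dP ddP Npos Ppos Pneg HA1 H2 H3 lN lU lP.
  set (h := fun y => e * (Derive P y)^2/2 - exp (P y) + c * U y - s * N y).
  assert (Hd : forall x, 0 < x -> is_derive h x 0).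
  { intros x Hx. pose proof (H2 x) as H. pose proof (H3 x) as H'. pose proof (Npos x Hx). pose proof (HA1 x Hx) as HA.
    assert (HNP : N x * Derive P x = c * Derive U x - s * Derive N x).
    { assert (HP : Derive P x = -(- c * Derive U x + U x * Derive U x + s * Derive N x / N x)) by lra.
      rewrite HP. assert (HU : N x * U x = c * N x - c) by lra.
      replace (N x * - (- c * Derive U x + U x * Derive U x + s * Derive N x / N x))
        with (c * N x * Derive U x - (N x * U x) * Derive U x - s * Derive N x) by (field; lra).
      rewrite HU. ring. }
    assert (HQ : Derive (Derive P) x = (exp (P x) - N x) / e) by (rewrite <- H'; field; lra).
    unfold h. auto_derive.
    - repeat split; auto.
    - change (fun x => N x) with N. change (fun x => U x) with U. change (fun x => P x) with P.
      change (fun x => Derive P x) with (Derive P).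
      rewrite HQ. field_simplify; [|lra]. 
      lra. }
  pose proof (const_deriv0 _ 0 Hd) as Hc.
  set (R0 := fun y => exp (P y) - 1 - c * U y + s * (N y - 1)).
  set (G0 := h 1 + 1 + s).
  assert (HE : forall x, 0 < x -> e * (Derive P x)^2 / 2 = R0 x + G0).
  { intros x Hx. pose proof (Hc x 1 Hx ltac:(lra)) as H. unfold G0, R0. unfold h in H |- *. lra. }
  assert (lR : is_lim R0 p_infty 0).
  { unfold R0. replace 0 with (1 - 1 - c * 0 + s * (1 - 1)) by ring.
    apply is_lim_plus'; [apply is_lim_minus'; [apply is_lim_minus'|]|].
    - pose proof (is_lim_comp_continuous P exp p_infty 0 lP (continuous_exp 0)) as HeP.
      rewrite exp_0 in HeP. exact HeP.
    - apply is_lim_const.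
    - apply is_lim_scal_fin; auto.
    - apply is_lim_scal_fin. apply is_lim_minus'; auto. apply is_lim_const. }
  assert (HG : G0 = 0).
  { destruct (Rtotal_order G0 0) as [Hlt|[Heq|Hgt]]; [exfalso| exact Heq | exfalso].
    - destruct (lim_pinf_eps R0 0 lR (- G0 / 2) ltac:(lra)) as [M HM].
      set (x := Rmax M 0 + 1).
      assert (M < x) by (unfold x; pose proof (Rmax_l M 0); lra).
      assert (0 < x) by (unfold x; pose proof (Rmax_r M 0); lra).
      pose proof (HM x ltac:(assumption)) as H1. apply Rabs_def2 in H1.
      pose proof (HE x ltac:(assumption)) as H2'.
      assert (0 <= e * (Derive P x)^2 / 2) by (assert (0 <= (Derive P x)^2) by apply pow2_ge_0; nra).
      lra.
    - destruct (lim_pinf_eps R0 0 lR (G0 / 2) ltac:(lra)) as [M HM].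
      set (x0 := Rmax M 0 + 1).
      assert (M < x0) by (unfold x0; pose proof (Rmax_l M 0); lra).
      assert (0 < x0) by (unfold x0; pose proof (Rmax_r M 0); lra).
      set (a := Rmin 1 (G0 / e)).
      assert (Ha0 : 0 < a) by (unfold a; apply Rmin_pos; [lra| apply Rdiv_lt_0_compat; lra]).
      assert (Ha1 : a <= 1) by (unfold a; apply Rmin_l).
      assert (Ha2 : a <= G0 / e) by (unfold a; apply Rmin_r).
      assert (Hsl : forall t, x0 <= t -> Derive P t <= - a).
      { intros t Ht. pose proof (HM t ltac:(lra)) as H1. apply Rabs_def2 in H1.
        pose proof (HE t ltac:(lra)) as H2'. pose proof (Pneg t ltac:(lra)) as H4.
        assert (HH : G0 / e <= (Derive P t)^2).
        { apply (Rmult_le_reg_l e); [lra|]. replace (e * (G0/e)) with G0 by (field; lra). lra. }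
        destruct (Rle_dec (Derive P t) (- a)) as [|Hn]; [assumption|].
        assert ((Derive P t)^2 < a * a) by nra. nra. }
      set (T := P x0 / a + 1).
      assert (HT : 0 < T) by (unfold T; pose proof (Ppos x0 ltac:(lra)); assert (0 < P x0 / a) by (apply Rdiv_lt_0_compat; lra); lra).
      assert (Hm : (fun t => - P t - a * t) x0 <= (fun t => - P t - a * t) (x0 + T)).
      { apply (mono_le (fun t => - P t - a * t) (fun t => - Derive P t - a) x0 (x0 + T)); [lra| |].
        - intros t Ht. pose proof (Derive_correct P t (dP t)) as HD. auto_derive.
          + exact (dP t).
          + change (fun x => P x) with P. ring.
        - intros t Ht. pose proof (Hsl t ltac:(lra)). lra. }
      simpl in Hm. pose proof (Ppos (x0 + T) ltac:(lra)).
      assert (a * T = P x0 + a) by (unfold T; field; lra).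
      lra. }
  intros x Hx. rewrite (HE x Hx), HG. unfold R0. ring.
Qed.

Lemma structure s g e N U P : 0 <= s -> 0 < g -> 0 < e -> solitary_wave s g e N U P ->
  let c := sqrt (1 + s) + g * e in
  (forall x, 0 < x -> 1 < N x) /\ (forall x, 0 < x -> 0 < P x) /\
  (forall x, 0 < x -> P x = Phi c s (N x - 1)) /\
  (forall x, 0 < x -> e * (Derive P x)^2 / 2 = Ee c s (N x - 1)) /\
  (forall x, 0 < x -> e * Derive (Derive P) x = Ff c s (N x - 1)) /\
  (forall x, 0 < x -> Derive P x <= 0) /\
  (forall x, is_derive P x (Derive P x)) /\
  (forall x, is_derive (Derive P) x (Derive (Derive P) x)) /\
  (forall x, continuous N x) /\ is_lim N p_infty 1 /\ strict_decr_pos N.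
Proof.
  intros Hs Hg He Hsw c.
  destruct Hsw as (sN & sU & sP & Hsys & (lN & _ & lU & _ & lP & _) & _ & _ & _ & _ & dN & dU & dP).
  assert (exN : forall x, ex_derive N x) by (intro x; exact (sN 1%nat x)).
  assert (exU : forall x, ex_derive U x) by (intro x; exact (sU 1%nat x)).
  assert (exP : forall x, ex_derive P x) by (intro x; exact (sP 1%nat x)).
  assert (exdP : forall x, ex_derive (Derive P) x) by (intro x; exact (sP 2%nat x)).
  assert (E1 : forall x, - c * Derive N x + Derive (fun y => N y * U y) x = 0) by (intro x; exact (proj1 (Hsys x))).
  assert (E2 : forall x, - c * Derive U x + U x * Derive U x + s * Derive N x / N x = - Derive P x)
    by (intro x; exact (proj1 (proj2 (Hsys x)))).
  assert (E3 : forall x, e * Derive (Derive P) x = exp (P x) - N x) by (intro x; exact (proj2 (proj2 (Hsys x)))).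
  assert (Npos : forall x, 0 < x -> 1 < N x) by (apply pos_of_decr_lim; auto).
  assert (Ppos : forall x, 0 < x -> 0 < P x) by (apply pos_of_decr_lim; auto).
  assert (Pneg : forall x, 0 < x -> Derive P x <= 0).
  { intros x Hx. apply (deriv_nonpos_of_decr P x); auto. apply Derive_correct; auto. }
  assert (HA1 := step_A1 c N U exN exU E1 lN lU).
  assert (HA2 := step_A2 c s N U P exN exU exP (fun x Hx => Rlt_trans _ _ _ Rlt_0_1 (Npos x Hx)) E2 lN lU lP).
  assert (HA3 := step_A3 c s e N U P He exN exU exP exdP (fun x Hx => Rlt_trans _ _ _ Rlt_0_1 (Npos x Hx))
                   Ppos Pneg HA1 E2 E3 lN lU lP).
  assert (HU : forall x, 0 < x -> U x = c * (N x - 1) / (1 + (N x - 1))).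
  { intros x Hx. pose proof (HA1 x Hx). pose proof (Npos x Hx). replace (1 + (N x - 1)) with (N x) by ring.
    apply (Rmult_eq_reg_l (N x)); [|lra]. field_simplify; lra. }
  assert (HPhi : forall x, 0 < x -> P x = Phi c s (N x - 1)).
  { intros x Hx. unfold Phi. replace (c * (N x - 1) / (1 + (N x - 1))) with (U x) by (rewrite HU; auto).
    replace (1 + (N x - 1)) with (N x) by ring. apply HA2; auto. }
  split; [exact Npos|]. split; [exact Ppos|]. split; [exact HPhi|].
  split.
  { intros x Hx. rewrite HA3 by auto. unfold Ee. rewrite <- HPhi by auto.
    replace (c * (N x - 1) / (1 + (N x - 1))) with (U x) by (rewrite HU; auto). ring. }
  split.
  { intros x Hx. rewrite E3. unfold Ff. rewrite <- HPhi by auto. ring. }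
  split; [exact Pneg|].
  split. { intro x. apply Derive_correct; auto. }
  split. { intro x. apply Derive_correct; auto. }
  split. { intro x. exact (ex_derive_continuous N x (exN x)). }
  split; assumption.
Qed.

Lemma exp_mono x y : x <= y -> exp x <= exp y.
Proof. intro H. destruct (Rle_lt_or_eq_dec _ _ H) as [Hl| ->]. apply Rlt_le, exp_increasing, Hl. lra. Qed.

Lemma V_facts s : 0 <= s -> sqrt (1 + s) * sqrt (1 + s) = 1 + s /\ 1 <= sqrt (1 + s).
Proof.
  intro Hs. split. apply sqrt_sqrt; lra.
  apply (Rle_trans _ (sqrt 1)). { rewrite sqrt_1; lra. } apply sqrt_le_1_alt. lra.
Qed.

Lemma amplitude s g e N U P : 0 <= s -> 0 < g -> 0 < e ->
  e * (10000 * (1 + s + g)^6) <= g -> solitary_wave s g e N U P ->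
  forall x, 0 < x -> N x - 1 < 4 * g * e / sqrt (1 + s).
Proof.
  intros Hs Hg He Hee Hsw.
  destruct (V_facts s Hs) as [HV HV1].
  assert (Hp : params s g (sqrt (1+s)) (1+s+g) e) by (unfold params; exact (conj Hs (conj Hg (conj HV (conj HV1 (conj eq_refl (conj He Hee))))))).
  pose proof (K1 _ _ _ _ _ Hp) as HK1.
  destruct (structure s g e N U P Hs Hg He Hsw) as (Npos & Ppos & HPhi & HEn & HF & Pneg & dP & ddP & cN & lN & dN).
  set (V := sqrt (1+s)) in *. set (X := 4 * g * e / V) in *.
  assert (HX : 0 < X) by (unfold X; apply Rdiv_lt_0_compat; nra).
  intros x0 Hx0. destruct (Rlt_dec (N x0 - 1) X) as [|Hn]; [assumption|exfalso].
  destruct (lim_pinf_eps N 1 lN X HX) as [M HM].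
  set (x2 := Rmax M x0 + 1).
  assert (M < x2) by (unfold x2; pose proof (Rmax_l M x0); lra).
  assert (x0 < x2) by (unfold x2; pose proof (Rmax_r M x0); lra).
  pose proof (HM x2 ltac:(assumption)) as H2. apply Rabs_def2 in H2.
  assert (Hc : continuity N) by (intro y; apply continuity_pt_filterlim; apply cN).
  destruct (IVT_gen N x0 x2 (1 + X) Hc) as [x [Hx Hxv]].
  { rewrite Rmin_right by lra. rewrite Rmax_left by lra. lra. }
  rewrite Rmin_left in Hx by lra. rewrite Rmax_right in Hx by lra.
  pose proof (HEn x ltac:(lra)) as HE.
  replace (N x - 1) with X in HE by lra.
  assert (0 <= e * (Derive P x)^2 / 2) by (assert (0 <= (Derive P x)^2) by apply pow2_ge_0; nra).
  lra.
Qed.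

Lemma phase1 s g e N U P : 0 <= s -> 0 < g -> 0 < e ->
  e * (10000 * (1 + s + g)^6) <= g -> solitary_wave s g e N U P ->
  N (2 + 16 / (g * sqrt (1 + s))) - 1 < 5 * g * e / (2 * sqrt (1 + s)).
Proof.
  intros Hs Hg He Hee Hsw.
  destruct (V_facts s Hs) as [HV HV1].
  assert (Hp : params s g (sqrt (1+s)) (1+s+g) e) by (unfold params; exact (conj Hs (conj Hg (conj HV (conj HV1 (conj eq_refl (conj He Hee))))))).
  pose proof (amplitude s g e N U P Hs Hg He Hee Hsw) as Hamp.
  destruct (structure s g e N U P Hs Hg He Hsw) as (Npos & Ppos & HPhi & HEn & HF & Pneg & dP & ddP & cN & lN & dN).
  destruct (params_more _ _ _ _ _ Hp) as (_ & _ & _ & HX4 & _).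
  set (V := sqrt (1+s)) in *.
  set (T2 := 2 + 16 / (g * V)).
  assert (HgV : 0 < g * V) by nra.
  assert (HT0 : 0 < 16 / (g * V)) by (apply Rdiv_lt_0_compat; lra).
  destruct (Rlt_dec (N T2 - 1) (5 * g * e / (2 * V))) as [|Hn]; [assumption|exfalso].
  apply Rnot_lt_le in Hn.
  assert (Hm : forall t, 1 <= t <= T2 -> 5 * g * e / (2 * V) <= N t - 1 <= 4 * g * e / V).
  { intros t Ht. split.
    - destruct (Req_dec t T2) as [->|Hne]; [lra|]. pose proof (dN t T2 ltac:(lra) ltac:(lra)). lra.
    - pose proof (Hamp t ltac:(lra)). lra. }
  assert (Hdd : forall t, 1 <= t <= T2 -> Derive (Derive P) t <= - (g^2 * e)).
  { intros t Ht. pose proof (K3 _ _ _ _ _ (N t - 1) Hp (Hm t Ht)) as H.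
    rewrite <- HF in H by lra. apply (Rmult_le_reg_l e); [lra|]. nra. }
  assert (Hd1 : forall t, 1 <= t <= T2 -> Derive P t <= - (g^2 * e) * (t - 1)).
  { intros t Ht.
    assert (H : (fun y => - Derive P y - g^2 * e * (y - 1)) 1 <= (fun y => - Derive P y - g^2 * e * (y - 1)) t).
    { apply (mono_le (fun y => - Derive P y - g^2 * e * (y - 1)) (fun y => - Derive (Derive P) y - g^2 * e) 1 t); [lra| |].
      - intros y Hy. pose proof (ddP y) as HD. auto_derive.
        + exists (Derive (Derive P) y). exact HD.
        + change (fun x => Derive P x) with (Derive P). ring.
      - intros y Hy. pose proof (Hdd y ltac:(lra)). lra. }
    simpl in H. pose proof (Pneg 1 ltac:(lra)). lra. }
  assert (H2 : (fun y => - P y - g^2 * e * (y - 1)^2 / 2) 1 <= (fun y => - P y - g^2 * e * (y - 1)^2 / 2) T2).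
  { apply (mono_le (fun y => - P y - g^2 * e * (y - 1)^2 / 2) (fun y => - Derive P y - g^2 * e * (y - 1)) 1 T2); [unfold T2; lra| |].
    - intros y Hy. pose proof (dP y) as HD. auto_derive.
      + exists (Derive P y). exact HD.
      + change (fun x => P x) with P. field.
    - intros y Hy. pose proof (Hd1 y Hy). lra. }
  simpl in H2.
  assert (HP1 : P 1 < 8 * g * e / V).
  { rewrite HPhi by lra. pose proof (Npos 1 ltac:(lra)). pose proof (Hamp 1 ltac:(lra)).
    destruct (Phi_bounds _ _ _ _ _ (N 1 - 1) Hp ltac:(lra)) as [_ Hb].
    assert (2 * (4 * g * e / V) = 8 * g * e / V) by (field; lra). lra. }
  assert (HT : 16 / (g * V) <= (T2 - 1)^2).
  { unfold T2. nra. }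
  assert (Hgoal : 8 * g * e / V <= g^2 * e * (T2 - 1)^2 / 2).
  { assert (g^2 * e * (16 / (g * V)) / 2 <= g^2 * e * (T2 - 1)^2 / 2).
    { assert (0 < g^2 * e) by (apply Rmult_lt_0_compat; [nra|lra]). nra. }
    assert (g^2 * e * (16 / (g * V)) / 2 = 8 * g * e / V) by (field; lra). lra. }
  pose proof (Ppos T2 ltac:(unfold T2; lra)).
  lra.
Qed.

Lemma per_eps s g e N U P d : 0 <= s -> 0 < g -> 0 < e ->
  e * (10000 * (1 + s + g)^6) <= g -> solitary_wave s g e N U P -> 0 < d ->
  forall xi, 2 + 16 / (g * sqrt (1 + s)) + Rabs (ln (10 * g / (sqrt (1 + s) * d))) / Rmin 1 (g / 24) <= xi ->
  0 < (N xi - 1) / e /\ (N xi - 1) / e <= d.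
Proof.
  intros Hs Hg He Hee Hsw Hd.
  destruct (V_facts s Hs) as [HV HV1].
  assert (Hp : params s g (sqrt (1+s)) (1+s+g) e) by (unfold params; exact (conj Hs (conj Hg (conj HV (conj HV1 (conj eq_refl (conj He Hee))))))).
  pose proof (phase1 s g e N U P Hs Hg He Hee Hsw) as Hph1.
  destruct (structure s g e N U P Hs Hg He Hsw) as (Npos & Ppos & HPhi & HEn & HF & Pneg & dP & ddP & cN & lN & dN).
  destruct (params_more _ _ _ _ _ Hp) as (_ & _ & _ & HX4 & _).
  set (V := sqrt (1+s)) in *.
  set (T2 := 2 + 16 / (g * V)) in *.
  set (k := Rmin 1 (g / 24)).
  assert (Hk0 : 0 < k) by (unfold k; apply Rmin_pos; lra).
  assert (Hk1 : k <= 1) by (unfold k; apply Rmin_l).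
  assert (Hk2 : k <= g / 24) by (unfold k; apply Rmin_r).
  assert (HgV : 0 < g * V) by nra.
  assert (HT0 : 0 < 16 / (g * V)) by (apply Rdiv_lt_0_compat; lra).
  assert (HT2 : 2 <= T2) by (unfold T2; lra).
  set (A := 10 * g / (V * d)).
  assert (HA : 0 < A) by (unfold A; apply Rdiv_lt_0_compat; nra).
  intros xi Hxi.
  assert (Hab : 0 <= Rabs (ln A) / k) by (apply Rdiv_le_0_compat; [apply Rabs_pos|lra]).
  assert (HxT : T2 <= xi) by lra.
  pose proof (Npos xi ltac:(lra)) as HNx.
  split. { apply Rdiv_lt_0_compat; lra. }
  assert (H5 : 5 * g * e / (2 * V) <= 4 * g * e / V).
  { assert (0 < g * e / V) by (apply Rdiv_lt_0_compat; nra).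
    replace (5 * g * e / (2 * V)) with (5/2 * (g * e / V)) by (field; lra).
    replace (4 * g * e / V) with (4 * (g * e / V)) by (field; lra). lra. }
  assert (Hm : forall t, T2 <= t -> 0 <= N t - 1 <= 5 * g * e / (2 * V)).
  { intros t Ht. pose proof (Npos t ltac:(lra)). split; [lra|].
    destruct (Req_dec t T2) as [->|Hne]; [lra|]. pose proof (dN T2 t ltac:(lra) ltac:(lra)). lra. }
  assert (HPd : forall t, T2 <= t -> Derive P t <= - k * P t).
  { intros t Ht. pose proof (Hm t Ht) as Hmt.
    pose proof (K2 _ _ _ _ _ (N t - 1) Hp Hmt) as HK. rewrite <- HEn in HK by lra.
    destruct (Phi_bounds _ _ _ _ _ (N t - 1) Hp ltac:(lra)) as [_ Hb]. rewrite <- HPhi in Hb by lra.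
    pose proof (Ppos t ltac:(lra)) as HPt. pose proof (Pneg t ltac:(lra)) as HPn.
    set (m := N t - 1) in *. set (p := Derive P t) in *. set (q := P t) in *.
    assert (H1 : g / 6 * m^2 <= p^2).
    { apply (Rmult_le_reg_l (e/2)); [lra|]. replace (e / 2 * (g / 6 * m ^ 2)) with (g / 12 * e * m^2) by field.
      replace (e / 2 * p^2) with (e * p^2 / 2) by field. lra. }
    assert (H2 : q^2 <= 4 * m^2) by nra.
    assert (H3 : g / 24 * q^2 <= p^2) by nra.
    destruct (Rle_dec p (- k * q)) as [|Hn]; [assumption|exfalso].
    assert (H4 : - p < k * q) by lra.
    assert (H5' : p^2 < (k * q)^2) by nra.
    assert (H6 : (k * q)^2 <= g / 24 * q^2).
    { replace ((k*q)^2) with ((k*k) * q^2) by ring. apply Rmult_le_compat_r; [apply pow2_ge_0|]. nra. }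
    lra. }
  assert (Hdec : (fun t => - (P t * exp (k * (t - T2)))) T2 <= (fun t => - (P t * exp (k * (t - T2)))) xi).
  { apply (mono_le (fun t => - (P t * exp (k * (t - T2)))) (fun t => - ((Derive P t + k * P t) * exp (k * (t - T2)))) T2 xi); [lra| |].
    - intros y Hy. pose proof (dP y) as HD. auto_derive.
      + exists (Derive P y). exact HD.
      + change (fun x => P x) with P. replace (y + - T2) with (y - T2) by ring. ring.
    - intros y Hy. pose proof (HPd y ltac:(lra)). pose proof (exp_pos (k * (y - T2))).
      assert (0 <= - (Derive P y + k * P y)) by lra. nra. }
  simpl in Hdec. replace (T2 - T2) with 0 in Hdec by ring. rewrite Rmult_0_r, exp_0, Rmult_1_r in Hdec.
  assert (HPT2 : P T2 < 5 * g * e / V).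
  { rewrite HPhi by lra. pose proof (Hm T2 ltac:(lra)).
    destruct (Phi_bounds _ _ _ _ _ (N T2 - 1) Hp ltac:(lra)) as [_ Hb].
    assert (2 * (5 * g * e / (2 * V)) = 5 * g * e / V) by (field; lra). lra. }
  assert (Hmxi : N xi - 1 <= 2 * P xi).
  { rewrite HPhi by lra. pose proof (Hm xi HxT).
    destruct (Phi_bounds _ _ _ _ _ (N xi - 1) Hp ltac:(lra)) as [Hb _]. lra. }
  assert (Hexp : exp (- (k * (xi - T2))) <= / A).
  { assert (Hl : ln A <= k * (xi - T2)).
    { pose proof (Rle_abs (ln A)).
      assert (Rabs (ln A) <= k * (xi - T2)).
      { apply (Rmult_le_reg_r (/ k)); [apply Rinv_0_lt_compat; lra|].
        replace (k * (xi - T2) * / k) with (xi - T2) by (field; lra). unfold Rdiv in Hxi. lra. }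
      lra. }
    rewrite <- (exp_ln A) by lra. rewrite <- exp_Ropp.
    apply exp_mono. lra. }
  pose proof (exp_pos (k * (xi - T2))) as Hep.
  assert (HPxi : P xi <= P T2 * exp (- (k * (xi - T2)))).
  { rewrite exp_Ropp. apply (Rmult_le_reg_r (exp (k * (xi - T2)))); [lra|].
    replace (P T2 * / exp (k * (xi - T2)) * exp (k * (xi - T2))) with (P T2) by (field; lra). lra. }
  assert (Hfin : N xi - 1 <= e * d).
  { pose proof (Ppos T2 ltac:(lra)). pose proof (exp_pos (- (k * (xi - T2)))).
    assert (P T2 * exp (- (k * (xi - T2))) <= (5 * g * e / V) * / A).
    { apply Rmult_le_compat; lra. }
    assert (2 * ((5 * g * e / V) * / A) = e * d) by (unfold A; field; split; lra).
    lra. }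
  apply (Rmult_le_reg_l e); [lra|]. replace (e * ((N xi - 1) / e)) with (N xi - 1) by (field; lra). lra.
Qed.


Theorem lemma4p2 (sigma gamma : R) (hsigma : 0 <= sigma) (hgamma : 0 < gamma)
  (eps1 : R) (heps1 : 0 < eps1) (n u phi : R -> R -> R)
  (hsw : forall eps, 0 < eps < eps1 -> solitary_wave sigma gamma eps (n eps) (u eps) (phi eps)) :
  exists eps0 delta1 : R, 0 < eps0 /\ eps0 <= eps1 /\ 0 < delta1 /\
    forall delta, 0 < delta < delta1 ->
      exists xi_delta, 0 < xi_delta /\
        forall xi eps, xi_delta <= xi -> 0 < eps < eps0 ->
          0 < (n eps xi - 1) / eps /\ (n eps xi - 1) / eps <= delta.
Proof.
  set (L := 1 + sigma + gamma).
  assert (HL6 : 0 < 10000 * L^6) by (assert (0 < L^6) by (apply pow_lt; unfold L; lra); lra).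
  exists (Rmin eps1 (gamma / (10000 * L^6))), 1.
  split. { apply Rmin_pos; [lra|]. apply Rdiv_lt_0_compat; lra. }
  split. { apply Rmin_l. }
  split. { lra. }
  intros delta Hdelta.
  exists (2 + 16 / (gamma * sqrt (1 + sigma)) + Rabs (ln (10 * gamma / (sqrt (1 + sigma) * delta))) / Rmin 1 (gamma / 24)).
  destruct (V_facts sigma hsigma) as [HV HV1].
  split.
  { assert (0 < 16 / (gamma * sqrt (1 + sigma))) by (apply Rdiv_lt_0_compat; [lra|nra]).
    assert (0 <= Rabs (ln (10 * gamma / (sqrt (1 + sigma) * delta))) / Rmin 1 (gamma / 24)).
    { apply Rdiv_le_0_compat; [apply Rabs_pos| apply Rmin_pos; lra]. }
    lra. }
  intros xi eps Hxi Heps.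
  pose proof (Rmin_l eps1 (gamma / (10000 * L^6))).
  pose proof (Rmin_r eps1 (gamma / (10000 * L^6))).
  assert (Hee : eps * (10000 * (1 + sigma + gamma)^6) <= gamma).
  { fold L. apply (Rmult_le_reg_r (/ (10000 * L^6))); [apply Rinv_0_lt_compat; lra|].
    replace (eps * (10000 * L ^ 6) * / (10000 * L ^ 6)) with eps by (field; unfold L; lra).
    unfold Rdiv in *. lra. }
  apply (per_eps sigma gamma eps (n eps) (u eps) (phi eps) delta hsigma hgamma ltac:(lra) Hee
           (hsw eps ltac:(lra)) ltac:(lra) xi Hxi).
Qed.
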